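(* Let $n\ge 2$ and $D$ be positive integers, let $\Gamma$ be a finite alphabet, and let $B\in\Gamma^*$ have length $2\le|B|\le n$. Let $H:\Gamma^2\to\{0,1\}$ be chosen at random as a $(D,5\log_2 n)$-iterated pair-wise independent function, and let $(B_0,B_1,\dots,B_s)=\mathrm{Split}_H(B)$. Then with probability at least $1-1/n^3$, for all $j\in\{0,\dots,s\}$, $|\mathrm{Dict}(B_j)|\le 5D\log_2 n$.
   Context: For a string $z=z_1\cdots z_m$, $z[i,j]=z_i\cdots z_j$, $z[i,j)=z[i,j-1]$, and $\mathrm{Dict}(z)=\{z[i,i+1]: 1\le i\le m-1\}$ is the set of pairs of consecutive symbols occurring in $z$. $\mathrm{Split}_H(B)$: let $i_1<\dots<i_s$ be all $i\in\{2,\dots,|B|-1\}$ with $H(B[i,i+1])=0$ ($s=0$ if none), let $i_0=1$, $i_{s+1}=|B|+1$, and output $B_j=B[i_j,i_{j+1})$ for $j=0,\dots,s$. A $(D,\ell)$-iterated pair-wise independent function $H:\Gamma^2\to\{0,1\}$ is obtained by choosing independently $h_1,\dots,h_\ell:\Gamma^2\to\{0,\dots,\ell D-1\}$, each uniformly from a pair-wise independent hash family (for $u\ne u'$, $\Pr[h(u)=v\wedge h(u')=v']=1/|V|^2$), and setting $H(ab)=0$ iff $\prod_i h_i(ab)=0$. The quantity $5\log_2 n$ is treated as an integer. *)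

(* Defs.v *)
From mathcomp Require Import all_boot all_order all_algebra.
Set Implicit Arguments. Unset Strict Implicit. Unset Printing Implicit Defensive.

Definition DictZ (G : finType) (z : seq G) : {set G * G} :=
  [set p in zip z (behead z)].

(* Split_H(B).  0-based: pair number p is (B_p, B_{p+1}); the paper's cut
   positions i in {2..|B|-1} (1-based) are p in {1..|B|-2}, i.e. p <> 0 and
   p < size (zip B (behead B)) = |B|-1.  We cut B just before position p. *)
Definition split_cuts (G : finType) (H : G * G -> nat) (B : seq G) : seq nat :=
  [seq q.1 | q <- zip (iota 0 (size B).-1) (zip B (behead B))
           & (q.1 != 0) && (H q.2 == 0)].

Definition SplitH (G : finType) (H : G * G -> nat) (B : seq G) : seq (seq G) :=
  let bs := 0 :: rcons (split_cuts H B) (size B) in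
  [seq take (q.2 - q.1) (drop q.1 B) | q <- zip bs (behead bs)].

(* Pairwise independent family of hash functions T -> 'I_m, indexed by a
   finite (multi)set K, the choice being uniform over K:
   for u <> u', Pr[h u = v /\ h u' = v'] = 1/m^2. *)
Definition pairwise_indep (K T : finType) (m : nat) (fam : K -> T -> 'I_m) :=
  forall u u' : T, u != u' -> forall v v' : 'I_m,
    #|[set k | (fam k u == v) && (fam k u' == v')]| * m ^ 2 = #|K|.

Definition iterH (T : finType) (l m : nat) (hs : 'I_l -> T -> 'I_m) (ab : T) : nat :=
  if (\prod_(i < l) (hs i ab : nat))%N == 0%N then 0 else 1.

(* 5 log_2 n "treated as an integer": ceil(5 log_2 n), the least e with n^5 <= 2^e. *)
Definition five_log2 (n : nat) : nat := up_log 2 (n ^ 5).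

(* Main.v *)
Require Import Defs.
From mathcomp Require Import all_boot all_order all_algebra.
Import GRing.Theory Num.Theory.
From mathcomp Require Import zify.


Lemma card_sum (K : finType) (P : pred K) : #|[set k | P k]| = \sum_k (P k : nat).
Proof.
rewrite -sum1_card big_mkcond /=; apply: eq_bigr => k _; rewrite inE; by case: (P k).
Qed.

Lemma sum_ind1 (m : nat) (b : bool) (x : 'I_m) :
  \sum_(v < m) (b && (x == v) : nat) = b.
Proof.
rewrite (bigD1 x) //= eqxx andbT big1 ?addn0 // => v /negbTE; rewrite eq_sym => ->.
by rewrite andbF.
Qed.

Lemma pw_aux j : 2 * j <= 2 * (0 < j) + j * (j - 1).
Proof. case: j => [|j] //=; rewrite subSS subn0; nia. Qed.

Lemma fin_aux K Z m A : 0 < m -> 2 * K * m <= 2 * Z * m + (m - 1) * K ->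
  A + Z = K -> 2 * A <= K.
Proof.
move=> m0 h e.
have : K * m <= (2 * Z) * m.
  rewrite mulnBl mul1n -!mulnA [m * K]mulnC in h.
  rewrite -mulnA; lia.
rewrite leq_mul2r => /orP [/eqP m00|h2]; lia.
Qed.

Lemma one_hash (K T : finType) (m : nat) (fam : K -> T -> 'I_m) (S : {set T}) :
  1 < m -> #|S| = m -> pairwise_indep fam ->
  2 * #|[set k | [forall u in S, fam k u != 0 :> nat]]| <= #|K|.
Proof.
move=> m1 cS pind.
have m0 : 0 < m by lia.
pose v0 : 'I_m := Ordinal m0.
pose z k u : bool := (fam k u == 0 :> nat).
have zE k u : z k u = (fam k u == v0) by [].
have marg2 u u' : u != u' -> (\sum_k (z k u && z k u' : nat)) * m ^ 2 = #|K|.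
  move=> uu'; rewrite -(pind u u' uu' v0 v0) card_sum.
  by congr (_ * _); apply: eq_bigr => k _; rewrite !zE.
have marg1 u : u \in S -> (\sum_k (z k u : nat)) * m = #|K|.
  move=> uS.
  have : 0 < #|S :\ u| by rewrite (cardsD1 u S) uS in cS; lia.
  case/card_gt0P => u' /setD1P [u'u u'S].
  have uu' : u != u' by rewrite eq_sym.
  have e : \sum_k (z k u : nat) = \sum_(v < m) \sum_k (z k u && (fam k u' == v) : nat).
    rewrite exchange_big /=; apply: eq_bigr => k _; by rewrite sum_ind1.
  have : (\sum_k (z k u : nat)) * m ^ 2 = m * #|K|.
    rewrite e big_distrl /=.
    rewrite (eq_bigr (fun _ => #|K|)); last first.
      move=> v _; rewrite -(pind u u' uu' v0 v) card_sum.
      by congr (_ * _); apply: eq_bigr => k _; rewrite !zE.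
    by rewrite sum_nat_const card_ord.
  move=> h; apply/eqP; by rewrite -(eqn_pmul2l m0) -h mulnCA mulnn.
pose x k := \sum_(u in S) (z k u : nat).
pose y k := \sum_(u in S) \sum_(u' in S :\ u) (z k u && z k u' : nat).
have yE k : y k = x k * (x k - 1).
  rewrite /y /x big_distrl /=; apply: eq_bigr => u uS.
  rewrite (big_setD1 u uS) /=.
  case zu: (z k u) => /=; last by rewrite big1.
  by rewrite add1n subSS subn0 mul1n.
have pw k : 2 * x k <= 2 * (0 < x k) + y k.
  by rewrite yE pw_aux.
have X : \sum_k x k = #|K|.
  have : (\sum_k x k) * m = m * #|K|.
    rewrite /x exchange_big /= big_distrl /=.
    by rewrite (eq_bigr (fun _ => #|K|)) ?sum_nat_const ?cS // => u uS; rewrite marg1.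
  by rewrite mulnC => /eqP; rewrite eqn_pmul2l // => /eqP.
have Y : (\sum_k y k) * m = (m - 1) * #|K|.
  have : (\sum_k y k) * m ^ 2 = m * ((m - 1) * #|K|).
    rewrite /y exchange_big /= big_distrl /=.
    rewrite (eq_bigr (fun _ => (m - 1) * #|K|)) ?sum_nat_const ?cS //.
    move=> u uS; rewrite exchange_big /= big_distrl /=.
    rewrite (eq_bigr (fun _ => #|K|)) ?sum_nat_const.
      by rewrite (cardsD1 u S) uS in cS; congr (_ * _); lia.
    move=> u' /setD1P [u'u _]; by rewrite marg2 // eq_sym.
  move=> h; apply/eqP; by rewrite -(eqn_pmul2l m0) -h mulnCA mulnn.
have PW : 2 * \sum_k x k <= 2 * \sum_k (0 < x k : nat) + \sum_k y k.
  rewrite !big_distrr -big_split /=; apply: leq_sum => k _; exact: pw.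
have AZ : \sum_k (x k == 0 : nat) + \sum_k (0 < x k : nat) = #|K|.
  rewrite -big_split /= -sum1_card; apply: eq_bigr => k _; by case: (x k).
have cA : #|[set k | [forall u in S, fam k u != 0 :> nat]]| = \sum_k (x k == 0 : nat).
  rewrite card_sum; apply: eq_bigr => k _; rewrite /x sum_nat_eq0.
  congr (nat_of_bool _); apply: eq_forallb => u; rewrite /z; by case: (_ \in _); case: (_ == _).
rewrite cA; move: PW; rewrite X => PW.
set A := \sum_k (x k == 0 : nat) in AZ *.
set Zc := \sum_k (0 < x k : nat) in AZ PW *.
set Ys := \sum_k y k in Y PW.
have : 2 * #|K| * m <= 2 * Zc * m + Ys * m by rewrite -mulnDl leq_mul2r PW orbT.
rewrite Y => h.

exact: (fin_aux _ _ _ _ m0 h AZ).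
Qed.

Lemma iterH_neq0 (T : finType) (l m : nat) (hs : 'I_l -> T -> 'I_m) ab :
  (iterH hs ab != 0) = [forall i, hs i ab != 0 :> nat].
Proof.
rewrite /iterH; case: ifP => h /=; apply/esym.
  apply/forallP => H; move: h; rewrite prod_nat_seq_eq0 => /hasP [i _ /= /eqP hi].
  by move: (H i); rewrite hi.
apply/forallP => i; apply/negP => /eqP hi.
by move: h; rewrite prod_nat_seq_eq0 => /negbT/hasPn/(_ i (mem_index_enum _)); rewrite hi.
Qed.

Lemma prod_card (L : nat) (K T : finType) m (fam : K -> T -> 'I_m) (S : {set T}) :
  #|[set ks : {ffun 'I_L -> K} | [forall u in S, iterH (fun i => fam (ks i)) u != 0]]|
  = #|[set k | [forall u in S, fam k u != 0 :> nat]]| ^ L.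
Proof.
rewrite -[in RHS](card_ord L) -card_ffun_on; apply: eq_card => ks; rewrite inE.
apply/forallP/ffun_onP => H.
  move=> i; rewrite inE; apply/forallP => u; apply/implyP => uS.
  by move: (H u); rewrite uS /= iterH_neq0 => /forallP.
move=> u; apply/implyP => uS; rewrite iterH_neq0; apply/forallP => i.
by move: (H i); rewrite inE => /forallP/(_ u); rewrite uS.
Qed.

Lemma zip_behead_drop (T : Type) (s : seq T) b :
  zip (drop b s) (behead (drop b s)) = drop b (zip s (behead s)).
Proof.
elim: s b => [|a s IH] b; first by case: b.
case: b => [|b]; first by rewrite !drop0.
by rewrite /= IH; case: s {IH}.
Qed.

Lemma zip_behead_take (T : Type) (s : seq T) k :
  zip (take k s) (behead (take k s)) = take k.-1 (zip s (behead s)).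
Proof.
elim: s k => [|a s IH] k; first by case: k.
case: k => [|k]; first by case: s IH.
rewrite /=.
case: s IH => [|a' s] IH; first by case: k.
case: k => [|k]; first by [].
rewrite /=.
by rewrite -(IH k.+1).
Qed.

Lemma mapfilter_zip_iota (T : Type) (x0 : T) (g : nat * T -> bool) (s : seq T) lo :
  [seq q.1 | q <- zip (iota lo (size s)) s & g q]
  = [seq p <- iota lo (size s) | g (p, nth x0 s (p - lo))].
Proof.
elim: s lo => [|a s IH] lo //=.
rewrite subnn /=; case: (g (lo, a)) => /=; rewrite IH; congr (_ :: _) || idtac;
  apply: eq_in_filter => p; rewrite mem_iota => /andP [h1 h2];
  by rewrite (_ : p - lo = (p - lo.+1).+1) //=; lia.
Qed.

Lemma gap (f : pred nat) e len : forall lo a,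
  (forall p, a < p < lo -> ~~ f p) ->
  forall b b', (b, b') \in zip (a :: rcons (filter f (iota lo len)) e)
                              (rcons (filter f (iota lo len)) e) ->
  forall p, b < p < b' -> p < lo + len -> ~~ f p.
Proof.
elim: len => [|len IH] lo a inv b b' /=.
  rewrite inE => /eqP [-> ->] p hp; rewrite addn0 => plo; apply: inv; lia.
case flo: (f lo) => /=.
  rewrite inE => /orP [/eqP [-> ->] p hp _|hin]; first by apply: inv.
  move=> p hp hl; apply: (IH lo.+1 lo _ b b' hin p hp); [move=> q hq; lia | by rewrite addSnnS].
move=> hin p hp hl; apply: (IH lo.+1 a _ b b' hin p hp); last by rewrite addSnnS.
move=> q hq; case: (ltngtP q lo) => [qlo|qlo|->]; [apply: inv; lia | lia | by rewrite flo].
Qed.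

Definition pfx_ok {T : finType} (m : nat) (s : seq T) k := m <= #|[set x in take k s]|.
Definition k0 {T : finType} (m : nat) (s : seq T) := find (pfx_ok m s) (iota 0 (size s).+1).
Definition Tset {T : finType} (m : nat) (s : seq T) :=
  [set x in take m (enum [set x in take (k0 m s) s])].

Lemma Tset_prop (T : finType) m (s : seq T) k : m <= #|[set x in take k s]| ->
  #|Tset m s| = m /\ Tset m s \subset [set x in take k s].
Proof.
move=> hk.
set k' := minn k (size s).
have ek : take k' s = take k s.
  rewrite /k'; case: (leqP k (size s)) => h //.
  by rewrite take_size take_oversize // ltnW.
have pk' : pfx_ok m s k' by rewrite /pfx_ok ek.
have k'lt : k' < size (iota 0 (size s).+1) by rewrite size_iota /k'; lia.
have hasp : has (pfx_ok m s) (iota 0 (size s).+1).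
  by apply/hasP; exists k' => //; rewrite mem_iota; lia.
have k0lt : k0 m s < size (iota 0 (size s).+1) by rewrite /k0 -has_find.
rewrite size_iota in k0lt.
have pk0 : pfx_ok m s (k0 m s).
  by move: (nth_find 0 hasp); rewrite nth_iota.
have k0le : k0 m s <= k'.
  rewrite leqNgt; apply/negP => h.
  by move: (before_find 0 h); rewrite nth_iota ?pk' //; lia.
have sub0 : [set x in take (k0 m s) s] \subset [set x in take k s].
  apply/subsetP => x; rewrite !inE -ek -(take_takel s k0le); exact: mem_take.
split.
  have u : uniq (take m (enum [set x in take (k0 m s) s])) by apply: take_uniq; exact: enum_uniq.
  rewrite /Tset cardsE (card_uniqP u) size_takel // -cardE; exact: pk0.
apply: subset_trans sub0; apply/subsetP => x; rewrite /Tset inE => /mem_take.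
by rewrite mem_enum.
Qed.

Lemma card_set_nil (T : finType) : #|[set x in ([::] : seq T)]| = 0.
Proof. by apply/eqP; rewrite cards_eq0; apply/eqP/setP => x; rewrite !inE. Qed.

Lemma cover (G : finType) (B : seq G) (H : G * G -> nat) m : 0 < m ->
  ~~ all (fun Bj => #|DictZ Bj| <= m) (SplitH H B) ->
  exists2 c, c < size B &
    (#|Tset m (drop c.+1 (zip B (behead B)))| = m /\
     [forall u in Tset m (drop c.+1 (zip B (behead B))), H u != 0]).
Proof.
move=> m0 /allPn [Bj /mapP [[b b'] hin ->]] /=; rewrite -ltnNge => hbad.
set P := zip B (behead B).
have sP : size P = (size B).-1 by rewrite /P size_zip size_behead; lia.
have eD : DictZ (take (b' - b) (drop b B)) = [set x in take (b' - b).-1 (drop b P)].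
  by rewrite /DictZ zip_behead_take zip_behead_drop.
rewrite eD in hbad.
have [x0 _] : exists x, x \in [set x in take (b' - b).-1 (drop b P)].
  apply/card_gt0P; exact: leq_ltn_trans (leq0n m) hbad.
have hb : b < size P.
  rewrite ltnNge; apply/negP => h; move: hbad; by rewrite drop_oversize //= card_set_nil.
have hk : 0 < (b' - b).-1.
  rewrite lt0n; apply/negP => /eqP h; move: hbad; by rewrite h take0 card_set_nil.
rewrite (drop_nth x0 hb) -(prednK hk) /= set_cons cardsU1 in hbad.
have hQ : m <= #|[set x in take (b' - b).-2 (drop b.+1 P)]|.
  move: hbad; case: (_ \notin _) => /= h; [rewrite add1n ltnS in h | rewrite add0n in h; apply: ltnW]; exact: h.
have [cT sT] := Tset_prop _ _ _ _ hQ.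
exists b; first by apply: (leq_trans hb); rewrite sP; exact: leq_pred.
split => //; apply/forallP => u; apply/implyP => uT.
have : u \in take (b' - b).-2 (drop b.+1 P) by move/subsetP: sT => /(_ u uT); rewrite inE.
case/(nthP x0) => j; rewrite size_take_min size_drop => hj <-.
rewrite nth_take ?nth_drop; last by lia.
have ecuts : split_cuts H B = [seq p <- iota 0 (size P) | (p != 0) && (H (nth x0 P p) == 0)].
  rewrite /split_cuts -/P -sP (mapfilter_zip_iota _ x0); apply: eq_filter => p; by rewrite subn0.
rewrite ecuts in hin.
pose f := fun p => (p != 0) && (H (nth x0 P p) == 0).
have inv0 : forall p, 0 < p < 0 -> ~~ f p by move=> p /andP [_].
have hg := gap f (size B) (size P) 0 0 inv0 b b' hin (b.+1 + j).
have hj1 : j < (b' - b).-2 := leq_trans hj (geq_minl _ _).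
have hj2 : j < size P - b.+1 := leq_trans hj (geq_minr _ _).
rewrite -!subn1 in hj1.
have h1 : b < b.+1 + j < b' by apply/andP; split; lia.
have h2 : b.+1 + j < 0 + size P by lia.
by move: (hg h1 h2); rewrite /f /=.
Qed.

Lemma final_rat (a N c : nat) : 0 < N -> 0 < c -> a <= N -> a * c <= N ->
  (1 - 1 / c%:R <= (N - a)%:R / N%:R :> rat)%R.
Proof.
move=> N0 c0 aN h.
have hc : (0 < c%:R :> rat)%R by rewrite ltr0n.
have hN : (0 < N%:R :> rat)%R by rewrite ltr0n.
have ha : (a%:R <= N%:R / c%:R :> rat)%R by rewrite ler_pdivlMr // -natrM ler_nat.
rewrite ler_pdivlMr // natrB // mulrBl mul1r mul1r mulrC.
by rewrite lerD2l lerN2.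
Qed.

Theorem lemma2 (n D : nat) (G : finType) (B : seq G)
  (K : finType) (fam : K -> G * G -> 'I_(five_log2 n * D)) :
  (2 <= n)%N -> (0 < D)%N -> (2 <= size B <= n)%N ->
  (0 < #|K|)%N -> pairwise_indep fam ->
  ((#|[set ks : {ffun 'I_(five_log2 n) -> K} |
        all (fun Bj => #|DictZ Bj| <= five_log2 n * D)%N
            (SplitH (iterH (fun i => fam (ks i))) B)]|%:R
     / (#|K| ^ five_log2 n)%:R : rat)
   >= 1 - 1 / (n ^ 3)%:R)%R.
Proof.
move=> n2 D0 /andP [B2 Bn] K0 pind.
set L := five_log2 n.
set m := L * D.
have hL : n ^ 5 <= 2 ^ L := up_logP _ (isT : 1 < 2).
have L2 : 2 <= L.
  rewrite leqNgt; apply/negP => h.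
  have h1 : 2 ^ L <= 2 ^ 1 by apply: leq_pexp2l => //; lia.
  have h2 : 2 ^ 5 <= n ^ 5 by rewrite leq_exp2r //; lia.
  move: (leq_trans h2 (leq_trans hL h1)); by [].
have m1 : 1 < m by rewrite /m; have := leq_mul L2 D0; rewrite muln1.
set Good := [set ks : {ffun 'I_L -> K} | _].
pose T c := Tset m (drop c.+1 (zip B (behead B))).
pose E c := [set ks : {ffun 'I_L -> K} | [forall u in T c, iterH (fun i => fam (ks i)) u != 0]].
have Ebound c : #|T c| = m -> #|E c| * 2 ^ L <= #|K| ^ L.
  move=> cT; rewrite /E prod_card -expnMn leq_exp2r; last by lia.
  rewrite mulnC; exact: (one_hash _ _ _ fam (T c) m1 cT pind).
have cardE' c : (#|T c| == m) * #|E c| = \sum_ks ((#|T c| == m) && (ks \in E c) : nat).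
  have -> : #|E c| = \sum_ks (ks \in E c : nat).
    by rewrite -sum1_card big_mkcond; apply: eq_bigr => ks _; case: (_ \in _).
  rewrite big_distrr /=; apply: eq_bigr => ks _.
  by case: (_ == _); case: (_ \in _).
have cov : #|~: Good| <= \sum_(c < size B) (#|T c| == m) * #|E c|.
  under eq_bigr => c _ do rewrite cardE'.
  rewrite exchange_big /=.
  rewrite -sum1_card big_mkcond /=; apply: leq_sum => ks _.
  rewrite inE; case hg: (ks \in Good) => //=.
  move: hg; rewrite inE => /negbT hbad.
  have [c hc [cT hE]] := cover _ _ _ _ (ltnW m1) hbad.
  rewrite (bigD1 (Ordinal hc)) //= cT eqxx /= /E inE.
  by move: hE; rewrite -/(T c) => ->.
have tot : #|~: Good| * 2 ^ L <= size B * #|K| ^ L.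
  apply: (leq_trans (leq_mul cov (leqnn _))); rewrite big_distrl /=.
  apply: (@leq_trans (\sum_(c < size B) #|K| ^ L)); last by rewrite sum_nat_const card_ord.
  apply: leq_sum => c _.
  case: eqP => [cT|_] //=; by rewrite mul1n Ebound.
have key : #|~: Good| * n ^ 3 <= #|K| ^ L.
  have h5 : #|~: Good| * n ^ 5 <= n * #|K| ^ L.
    exact: leq_trans (leq_mul (leqnn _) hL) (leq_trans tot (leq_mul Bn (leqnn _))).
  have h4 : #|~: Good| * n ^ 4 <= #|K| ^ L.
    move: h5; rewrite expnSr mulnA [n * _]mulnC leq_mul2r => /orP [/eqP n0|//]; lia.
  apply: leq_trans h4; apply: leq_mul => //; apply: leq_pexp2l => //; lia.
have eC := cardsC Good; rewrite card_ffun card_ord in eC.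
have eG : #|Good| = #|K| ^ L - #|~: Good| by rewrite -eC addnK.
have bN : #|~: Good| <= #|K| ^ L by rewrite -eC leq_addl.
rewrite eG; apply: final_rat => //; [by rewrite expn_gt0 K0 | by rewrite expn_gt0; lia].
Qed.
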